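(* Let $X=\Gamma_1\sqcup\Gamma_2$ be a Heisenberg partition of a topological space $X$. Then for every continuous injective map $\gamma\colon\mathbb T\to X$ we have $\gamma(\mathbb T)\subseteq\Gamma_2$.
   Context: $\mathbb T=\{z\in\mathbb C\mid |z|=1\}$. A Heisenberg partition of $X$ is a partition $X=\Gamma_1\sqcup\Gamma_2$ such that for some integer $n\ge1$: (i) $\Gamma_1$ is open in $X$ and there is a homeomorphism $\psi_1\colon\mathbb R^\times\to\Gamma_1$ ($\mathbb R^\times=\mathbb R\setminus\{0\}$); (ii) there is a homeomorphism $\psi_2\colon\mathbb R^{2n}\to\Gamma_2$; (iii) for every subset $A\subseteq\mathbb R^\times$ the following are equivalent: $0$ is an accumulation point of $A$; $\Gamma_2\cap\overline{\psi_1(A)}\ne\emptyset$; $\Gamma_2\subseteq\overline{\psi_1(A)}$. *)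

(* Defs.v *)
From HB Require Import structures.
From mathcomp Require Import all_boot all_order all_algebra.
From mathcomp Require Import all_classical all_reals all_analysis.
Unset Printing Implicit Defensive.
Import Order.TTheory GRing.Theory Num.Theory numFieldNormedType.Exports.
Local Open Scope classical_set_scope.
Local Open Scope ring_scope.

Definition homeo_on {S T : topologicalType} (A : set S) (B : set T) (f : S -> T) :=
  [/\ {within A, continuous f}, f @` A = B &
      exists g : T -> S, {within B, continuous g} /\ (forall x, A x -> g (f x) = x)].

Definition Rtimes (R : realType) : set R := [set x | x != 0].

Definition circle (R : realType) : set (R * R)%type :=
  [set z | z.1 ^+ 2 + z.2 ^+ 2 = 1].

Definition heisenberg_partition (R : realType) (X : topologicalType)
    (G1 G2 : set X) :=
  [/\ G1 `&` G2 = set0, G1 `|` G2 = setT &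
  exists n : nat, (1 <= n)%N /\
  exists (psi1 : R -> X) (psi2 : 'rV[R]_(2 * n) -> X),
    [/\ open G1, homeo_on (Rtimes R) G1 psi1, homeo_on setT G2 psi2 &
        forall A : set R, A `<=` Rtimes R ->
          (limit_point A 0 <-> G2 `&` closure (psi1 @` A) !=set0) /\
          (G2 `&` closure (psi1 @` A) !=set0 <-> G2 `<=` closure (psi1 @` A))]].

(* Main.v *)
Require Import Defs.
From HB Require Import structures.
From mathcomp Require Import all_boot all_order all_algebra.
From mathcomp Require Import all_classical all_reals all_analysis.
From mathcomp Require Import ring lra.
Import numFieldNormedType.Exports.
Import Order.TTheory GRing.Theory Num.Theory.
Local Open Scope classical_set_scope.
Local Open Scope ring_scope.
Lemma within_comp {S T U : topologicalType} (A : set T) (h : T -> U) (f : S -> T) x :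
 {within A, continuous h} -> {for x, continuous f} -> (\forall y \near x, A (f y)) -> A (f x) ->
 {for x, continuous (h \o f)}.
Proof.
move=> /subspace_continuousP hc fc nA Afx M /= hM.
have := hc _ Afx M hM => /= hM'.
have := fc _ hM' => /= hM''.
apply: (filterS2 _ _ nA hM'') => y Ay H; exact: H Ay.
Qed.

Lemma closure_img {S T : topologicalType} (f : S -> T) (B : set S) x :
  {for x, continuous f} -> closure B x -> closure (f @` B) (f x).
Proof.
move=> fc Bx M /fc /Bx [y [By My]]; exists (f y); split => //; by exists y.
Qed.

Lemma trig_inj (R : realType) (a b : R) : cos a = cos b -> sin a = sin b -> `|a - b| < 2 -> a = b.
Proof.
move=> ec es hab.
have s0 : forall u v : R, cos u = cos v -> sin u = sin v -> sin (u - v) = 0.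
  by move=> u v eu ev; rewrite sinB eu ev mulrC subrr.
have p2 := @pi_ge2 R.
case: (ltgtP a b) => // h.
- have : 0 < sin (b - a).
    apply: sin_gt0_pi; rewrite subr_gt0 h /=.
    rewrite ltr0_norm ?subr_lt0 // in hab; lra.
  by rewrite (s0 _ _ (esym ec) (esym es)) ltxx.
- have : 0 < sin (a - b).
    apply: sin_gt0_pi; rewrite subr_gt0 h /=.
    rewrite gtr0_norm ?subr_gt0 // in hab; lra.
  by rewrite (s0 _ _ ec es) ltxx.
Qed.

Definition Pm (R : realType) (t : R * R) (th : R) : R * R :=
  (t.1 * cos th - t.2 * sin th, t.1 * sin th + t.2 * cos th).

Lemma Pm_circle (R : realType) (t : R * R) (th : R) : circle R t -> circle R (@Pm R t th).
Proof.
rewrite /circle /Pm /= => h.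
have c := cos2Dsin2 th.
transitivity ((t.1 ^+ 2 + t.2 ^+ 2) * (cos th ^+ 2 + sin th ^+ 2)); first by ring.
by rewrite h c mulr1.
Qed.

Lemma Pm_inj (R : realType) (t : R * R) (a b : R) : circle R t -> @Pm R t a = @Pm R t b -> cos a = cos b /\ sin a = sin b.
Proof.
rewrite /circle /Pm => h [e1 e2].
have kc : forall th : R, cos th = t.1 * (t.1 * cos th - t.2 * sin th) + t.2 * (t.1 * sin th + t.2 * cos th).
  move=> th; transitivity ((t.1 ^+ 2 + t.2 ^+ 2) * cos th); first by rewrite h mul1r.
  by ring.
have ks : forall th : R, sin th = - t.2 * (t.1 * cos th - t.2 * sin th) + t.1 * (t.1 * sin th + t.2 * cos th).
  move=> th; transitivity ((t.1 ^+ 2 + t.2 ^+ 2) * sin th); first by rewrite h mul1r.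
  by ring.
by split; [rewrite (kc a) (kc b) e1 e2 | rewrite (ks a) (ks b) e1 e2].
Qed.

Lemma Pm0 (R : realType) (t : R * R) : @Pm R t 0 = t.
Proof. by rewrite /Pm sin0 cos0 !mulr0 !mulr1 subr0 add0r; case: t. Qed.

Lemma Pm_cont (R : realType) (t : R * R) : continuous (@Pm R t).
Proof.
move=> th; rewrite /Pm.
apply: (@cvg_pair _ _ _ _ (nbhs _) (nbhs _)).
  apply: cvgB; apply: cvgM; (try exact: cvg_cst); [exact: continuous_cos | exact: continuous_sin].
apply: cvgD; apply: cvgM; (try exact: cvg_cst); [exact: continuous_sin | exact: continuous_cos].
Qed.

Lemma Pm_per (R : realType) (t : R * R) (th : R) : @Pm R t (th + pi *+ 2) = @Pm R t th.
Proof. by rewrite /Pm cosD sinD cos2pi sin2pi !mulr0 !mulr1 subr0 addr0. Qed.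

Theorem lemma2p6 (R : realType) (X : topologicalType) (G1 G2 : set X) :
  heisenberg_partition R X G1 G2 ->
  forall gamma : (R * R)%type -> X,
    {within circle R, continuous gamma} ->
    {in circle R &, injective gamma} ->
    gamma @` circle R `<=` G2.
Proof.
move=> [_ G12 [n [_ [psi1 [psi2 [oG1 [_ img [g [gc gK]]] _ iii]]]]]] gamma gamc gamI y [t0 ct0 <-].
have : (G1 `|` G2) (gamma t0) by rewrite G12.
case=> // G1t0; exfalso.
have Gpsi : forall y, G1 y -> exists2 x, Rtimes R x & psi1 x = y.
  by move=> y0; rewrite -img => -[x hx <-]; exists x.
have gR : forall y, G1 y -> g y != 0.
  by move=> y0 /Gpsi [x hx <-]; rewrite gK.
have psig : forall y, G1 y -> psi1 (g y) = y.
  by move=> y0 /Gpsi [x hx <-]; rewrite gK.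
pose P := @Pm R t0.
have Pc : forall th, circle R (P th) by move=> th; exact: Pm_circle.
pose phi z := g (gamma z).
pose s : R := if 0 < phi t0 then 1 else -1.
have s0 : 0 < s * phi t0.
  have hn := gR _ G1t0; rewrite /s; case: (ltrP 0 (phi t0)) => h.
    by rewrite mul1r.
  by rewrite mulN1r oppr_gt0 lt_neqAle hn h.
have sn : `|s| = 1 by rewrite /s; case: ifP => _; rewrite ?normrN normr1.
have sn0 : s != 0 by rewrite -normr_eq0 sn oner_eq0.
pose c := s * phi t0 / 2.
have c0 : 0 < c by rewrite /c divr_gt0.
pose H th := if pselect (G1 (gamma (P th))) is left _ then Num.max (s * phi (P th) - c) 0 else 0.
have P0 : P 0 = t0 by exact: Pm0.
have H0 : H 0 = c.
  rewrite /H P0; case: pselect => // _.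
  have -> : s * phi t0 - c = c by rewrite /c; field.
  by rewrite max_l // ltW.
have Hge0 : forall th, 0 <= H th.
  by move=> th; rewrite /H; case: pselect => // _; rewrite le_max lexx orbT.
have Hpos : forall th, 0 < H th -> G1 (gamma (P th)) /\ H th = s * phi (P th) - c.
  move=> th; rewrite /H; case: pselect => [G|]; last by rewrite ltxx.
  move=> h; split => //; move: h; rewrite lt_max ltxx orbF => h.
  by rewrite max_l // ltW.
have Hper : forall th, H (th + pi *+ 2) = H th.
  by move=> th; rewrite /H /P Pm_per.
have Hinj : forall a b, 0 < H a -> 0 < H b -> H a = H b -> `|a - b| < 2 -> a = b.
  move=> a b /Hpos [Ga ->] /Hpos [Gb ->] /addIr /(mulfI sn0) e ab.
  have e2 : gamma (P a) = gamma (P b) by rewrite -(psig _ Ga) -(psig _ Gb); exact: (congr1 psi1 e).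
  have e3 : P a = P b.
    by apply: gamI => //; exact: mem_set (Pc _).
  have [ec es] := @Pm_inj R t0 a b ct0 e3.
  exact: trig_inj.
have gPc : forall th, {for th, continuous (gamma \o P)}.
  move=> th; have := (@within_comp R (R * R)%type X (circle R) gamma P th gamc (@Pm_cont R t0 th)); apply; last exact: Pc.
  by apply: filterE => t; exact: Pc.
have Hcont : continuous H.
  move=> th; case: (pselect (G1 (gamma (P th)))) => Gth.
    have nG : \forall t \near th, G1 (gamma (P t)).
      apply: (gPc th); move: oG1; rewrite openE => /(_ _ Gth); exact.
    have phic : {for th, continuous (g \o (gamma \o P))}.
      by have := @within_comp R X R G1 g (gamma \o P) th gc (gPc th) nG Gth.
    pose K t := Num.max (s * phi (P t) - c) 0.
    have Kc : {for th, continuous K}.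
      apply: (@continuous_max _ _ (fun t => s * phi (P t) - c) (fun=> 0)); last exact: cvg_cst.
      apply: cvgB; last exact: cvg_cst.
      apply: cvgM; first exact: cvg_cst.
      exact: phic.
    have HK : H th = K th by rewrite /H /K; case: pselect.
    move=> M; rewrite /= HK => /Kc /= KM.
    suff : \forall t \near th, M (H t) by [].
    near=> t.
    have Gt : G1 (gamma (P t)) by near: t.
    have Kt : M (K t) by near: t; exact: KM.
    by rewrite /H; case: pselect.
  have HT : H th = 0 by rewrite /H; case: pselect.
  rewrite /continuous_at HT; apply/cvgrPdist_lt => e e0.
  suff : \forall t \near th, H t < e.
    by apply: filterS => t ht; rewrite sub0r normrN ger0_norm.
  apply: contrapT => nn.
  pose B := [set t | e <= H t].
  have clB : closure B th.
    move=> N hN; apply/set0P/negP => /eqP hBN; apply: nn.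
    apply: filterS hN => t Nt; rewrite ltNge; apply/negP => eH.
    have : (B `&` N) t by split.
    by rewrite hBN.
  have cl2 := @closure_img R X (gamma \o P) B th (gPc th) clB.
  have G2th : G2 (gamma (P th)).
    have : (G1 `|` G2) (gamma (P th)) by rewrite G12.
    by case.
  have BG : forall t, B t -> G1 (gamma (P t)).
    by move=> t Bt; have [] := Hpos t (lt_le_trans e0 Bt).
  pose A := g @` ((gamma \o P) @` B).
  have AR : A `<=` Rtimes R.
    by move=> _ [_ [t Bt <-] <-]; rewrite /Rtimes /=; apply: gR; exact: BG.
  have pA : psi1 @` A = (gamma \o P) @` B.
    apply/seteqP; split.
      by move=> _ [_ [_ [t Bt <-] <-] <-]; rewrite psig; [exists t | exact: BG].
    move=> _ [t Bt <-]; exists (g (gamma (P t))); last by rewrite psig //; exact: BG.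
    by exists (gamma (P t)) => //; exists t.
  have [lp _] := iii A AR.
  have /lp hlp : G2 `&` closure (psi1 @` A) !=set0 by rewrite pA; exists (gamma (P th)).
  have [x [x0 Ax xe]] := hlp _ (@nbhs0_lt R R^o e e0).
  case: Ax => _ [t Bt <-] ex.
  have [_ Ht] := Hpos t (lt_le_trans e0 Bt).
  move: Bt; rewrite /B /= Ht /phi /= ex => ex2.
  have : s * x <= `|x| by rewrite -[`|x|]mul1r -sn -normrM ler_norm.
  move: xe; lra.
have p2 := @pi_ge2 R.
have p4 : 4 <= pi *+ 2 :> R by rewrite mulr2n; lra.
have [th1 th1I maxf] := @EVT_max R H 0 (pi *+ 2) ltac:(lra) (continuous_subspaceT Hcont).
move: (th1I); rewrite in_itv /= => /andP [l1 u1].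
have Hmax : forall t, `|t - th1| <= 1 -> H t <= H th1.
  move=> t; rewrite ler_norml => /andP [tl tu].
  have [tneg|tpos] := ltP t 0.
    rewrite -Hper; apply: maxf; rewrite in_itv /=; apply/andP; split; lra.
  have [tle|tgt] := leP t (pi *+ 2).
    by apply: maxf; rewrite in_itv /= tpos tle.
  have -> : t = (t - pi *+ 2) + pi *+ 2 by rewrite subrK.
  rewrite Hper; apply: maxf; rewrite in_itv /=; apply/andP; split; lra.
have Hth1 : 0 < H th1.
  apply: (lt_le_trans c0); rewrite -H0; apply: maxf; rewrite in_itv /= lexx /=; lra.
have nH : \forall t \near th1, 0 < H t.
  have := Hcont th1; move/cvgrPdist_lt/(_ _ Hth1).
  apply: filterS => t; rewrite ltr_norml => /andP [_ h]; lra.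
have [d /= d0 hd] := (nbhs_ballP _ _).1 nH.
have hd' : forall t, `|th1 - t| < d -> 0 < H t.
  by move=> t ht; apply: hd; rewrite /ball /=.
pose del := Num.min (d / 2) (1 / 2).
have dl : del <= 1 / 2 by rewrite /del ge_min lexx orbT.
have dd : del <= d / 2 by rewrite /del ge_min lexx.
have dp : 0 < del by rewrite /del lt_min !divr_gt0.
have d2 : d / 2 < d by lra.
pose a := th1 - del.
pose b := th1 + del.
have na : `|a - th1| = del by rewrite (_ : a - th1 = - del) ?normrN ?gtr0_norm //; rewrite /a; ring.
have na' : `|th1 - a| = del by rewrite (_ : th1 - a = del) ?gtr0_norm //; rewrite /a; ring.
have nb : `|b - th1| = del by rewrite (_ : b - th1 = del) ?gtr0_norm //; rewrite /b; ring.
have nb' : `|th1 - b| = del by rewrite (_ : th1 - b = - del) ?normrN ?gtr0_norm //; rewrite /b; ring.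
have Ha : 0 < H a by apply: hd'; rewrite na'; lra.
have Hb : 0 < H b by apply: hd'; rewrite nb'; lra.
have Ha' : H a < H th1.
  rewrite lt_neqAle Hmax; last by rewrite na; lra.
  rewrite andbT; apply/eqP => e.
  have := Hinj a th1 Ha Hth1 e; rewrite na => /(_ ltac:(lra)); rewrite /a => h; have dz : del = 0 by lra.
  by move: dp; rewrite dz ltxx.
have Hb' : H b < H th1.
  rewrite lt_neqAle Hmax; last by rewrite nb; lra.
  rewrite andbT; apply/eqP => e.
  have := Hinj b th1 Hb Hth1 e; rewrite nb => /(_ ltac:(lra)); rewrite /b => h; have dz : del = 0 by lra.
  by move: dp; rewrite dz ltxx.
case: (leP (H a) (H b)) => hab.
  have [t tI Ht] := @IVT R H a th1 (H b) ltac:(rewrite /a; lra) (continuous_subspaceT Hcont)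
    ltac:(by rewrite ge_min le_max hab (ltW Hb') !orbT).
  move: tI; rewrite in_itv /= => /andP [tl tu].
  have := Hinj t b ltac:(by rewrite Ht) Hb Ht.
  rewrite ltr_norml /b; move=> h.
  have : t = th1 + del by apply: h; apply/andP; split; rewrite /a in tl; lra.
  lra.
have [t tI Ht] := @IVT R H th1 b (H a) ltac:(rewrite /b; lra) (continuous_subspaceT Hcont)
  ltac:(by rewrite ge_min le_max (ltW hab) (ltW Ha') !orbT).
move: tI; rewrite in_itv /= => /andP [tl tu].
have := Hinj t a ltac:(by rewrite Ht) Ha Ht.
rewrite ltr_norml /a; move=> h.
have : t = th1 - del by apply: h; apply/andP; split; rewrite /b in tu; lra.
lra.
Unshelve. all: by end_near.
Qed.
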